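(* Let $i\geq 3$ be an integer and let $D$ be a strong digraph with $D\in\mathcal{LE}_i$. Then $D$ has a small quasi-kernel, i.e. an independent set $Q\subseteq V(D)$ with $|Q|\leq |V(D)|/2$ such that for every vertex $x\notin Q$ there is a directed path of length $1$ or $2$ from $x$ to some vertex of $Q$.
   Context: All digraphs are finite, without loops or multiple arcs. Paths and cycles are directed; the length of a path or cycle is its number of arcs. A set of vertices is independent if no two distinct vertices of it are joined by an arc. A digraph is strong if for every ordered pair of vertices $x,y$ there is a directed path from $x$ to $y$. For a subdigraph $H$ of a digraph $D$, an ear of $H$ in $D$ is either a directed path in $D$ whose two end vertices lie in $H$ and whose internal vertices do not lie in $H$, or a directed cycle in $D$ having exactly one vertex in $H$. An ear decomposition of a strong digraph $D$ is a sequence $(D_0,D_1,\ldots,D_k)$ of strong subdigraphs of $D$ such that $D_0$ is a directed cycle, $D_{j+1}=D_j\cup P_j$ where $P_j$ is an ear of $D_j$ in $D$ for every $j\in\{0,\ldots,k-1\}$, and $D_k=D$. For an integer $i\geq 1$, $\mathcal{LE}_i$ denotes the family of strong digraphs having an ear decomposition in which every ear has length at least $i$. *)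

(* Defs.v *)
(* A digraph is a finite vertex type V with an arc relation
   E : rel V (loopless: irreflexive; a relation has no multiple arcs). *)
From mathcomp Require Import all_boot.
Set Implicit Arguments. Unset Strict Implicit. Unset Printing Implicit Defensive.

Section Digraphs.
Variables (V : finType) (E : rel V).

Definition loopless : Prop := forall x, ~~ E x x.

Definition strong : Prop := forall x y : V, connect E x y.

(* A directed path x :: p (distinct vertices, consecutive arcs in E);
   its length is size p. *)
Definition is_dpath (x : V) (p : seq V) : bool := path E x p && uniq (x :: p).

Definition dpath_arcs (x : V) (p : seq V) : seq (V * V) := zip (x :: p) p.

(* A directed cycle x :: p (distinct vertices, length size p + 1 >= 2). *)
Definition is_dcycle (x : V) (p : seq V) : bool :=
  [&& 0 < size p, path E x (rcons p x) & uniq (x :: p)].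

Definition dcycle_arcs (x : V) (p : seq V) : seq (V * V) :=
  zip (x :: p) (rcons p x).

Definition ear_path (S : {set V}) (x : V) (p : seq V) : bool :=
  [&& is_dpath x p, 0 < size p, x \in S, last x p \in S &
      all (fun v => v \notin S) (behead (belast x p))].

Definition ear_cycle (S : {set V}) (x : V) (p : seq V) : bool :=
  is_dcycle x p && (count (mem S) (x :: p) == 1).

(* LE_reach i S A : (S, A) (vertex set, arc set) is some D_j of an ear
   decomposition starting with a directed cycle of D, all of whose ears
   (P_0, ..., P_{j-1}) have length at least i. *)
Inductive LE_reach (i : nat) : {set V} -> {set V * V} -> Prop :=
| LE_start x p : is_dcycle x p ->
    LE_reach i [set v in x :: p] [set e in dcycle_arcs x p]
| LE_add_path S A x p : LE_reach i S A -> ear_path S x p -> i <= size p ->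
    LE_reach i (S :|: [set v in x :: p]) (A :|: [set e in dpath_arcs x p])
| LE_add_cycle S A x p : LE_reach i S A -> ear_cycle S x p -> i <= (size p).+1 ->
    LE_reach i (S :|: [set v in x :: p]) (A :|: [set e in dcycle_arcs x p]).

Definition in_LE (i : nat) : Prop :=
  LE_reach i [set: V] [set e | E e.1 e.2].

Definition independent (Q : {set V}) : Prop :=
  forall x y, x \in Q -> y \in Q -> ~~ E x y.

Definition quasi_kernel (Q : {set V}) : Prop :=
  independent Q /\
  forall x, x \notin Q ->
    exists2 q, q \in Q & (E x q \/ exists z, E x z && E z q).

Definition small_quasi_kernel (Q : {set V}) : Prop :=
  quasi_kernel Q /\ 2 * #|Q| <= #|V|.

End Digraphs.

(* Main.v *)
Require Import Defs.
From mathcomp Require Import all_boot zify.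
Set Implicit Arguments. Unset Strict Implicit. Unset Printing Implicit Defensive.


Definition arcsF (V : eqType) (u : V) (s : seq V) (y : V) : seq (V * V) :=
  zip (u :: s) (rcons s y).
Definition cs (V : eqType) (s : seq V) (y : V) : seq (V * V) :=
  if s is u :: s' then arcsF u s' y else [::].

Lemma arcsF_cons (V : eqType) (u : V) s y : arcsF u s y = (u, head y s) :: cs s y.
Proof. by case: s. Qed.

Lemma mem_zip2 (V : eqType) (s t : seq V) a c :
  (a, c) \in zip s t -> (a \in s) && (c \in t).
Proof.
elim: s t => [|x s IH] [|z t] //=; rewrite in_cons => /orP [/eqP [-> ->]|/IH /andP[h1 h2]].
  by rewrite !in_cons !eqxx.
by rewrite !in_cons h1 h2 !orbT.
Qed.

Fixpoint greedy (V : Type) (b : bool) (s : seq V) : seq V * nat :=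
  match s with
  | [::] => ([::], if b then 0 else 2)
  | u :: s' => let r := greedy b s' in
      if 1 < r.2 then (u :: r.1, 0) else (r.1, r.2.+1)
  end.

Lemma greedy_struct (V : eqType) b (s : seq V) : uniq s ->
  [/\ {subset (greedy b s).1 <= s}, uniq (greedy b s).1,
      3 * size (greedy b s).1 + (greedy b s).2 = size s + (if b then 0 else 2)
    & (greedy b s).2 <= 2].
Proof.
elim: s => [|u s IH] /=; first by case: b.
case/andP => us /IH [Hs Hu Hc Hd].
case: ltnP => Hd2 /=.
  split => //=; last (by lia).
    by move=> z; rewrite !in_cons => /orP [->|/Hs ->] //; rewrite orbT.
  by rewrite Hu andbT; apply/negP => /Hs; rewrite (negbTE us).
split => //; last (by lia).
by move=> z /Hs; rewrite in_cons => ->; rewrite orbT.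
Qed.


Lemma greedy_sem (V : eqType) b (y : V) s (T : pred V) (R : rel V) :
  uniq (y :: s) ->
  (forall z, z \in s -> T z = (z \in (greedy b s).1)) -> T y = b ->
  (forall e, e \in cs s y -> R e.1 e.2) ->
  [/\ T (head y s) = ((greedy b s).2 == 0),
      (greedy b s).2 == 1 -> exists2 q, T q & R (head y s) q,
      forall a c, (a, c) \in cs s y -> ~~ (T a && T c) &
      forall v, v \in s -> ~~ T v -> exists2 q, T q & (R v q \/ exists z, R v z && R z q)].
Proof.
elim: s => [|u s IH] /= Hu HT Ty HR.
  by case: b Ty => Ty; split.
move: Hu; rewrite !in_cons negb_or => /andP [/andP [yu ys]] /andP [us Hus].
have [Psub _ _ _] := greedy_struct b Hus.
have HT' : forall z, z \in s -> T z = (z \in (greedy b s).1).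
  move=> z zs; rewrite HT ?in_cons ?zs ?orbT //.
  case: ifP => _ //=; rewrite in_cons.
  by have -> : (z == u) = false by apply/negbTE; apply: contraNneq us => <-.
have HR' : forall e, e \in cs s y -> R e.1 e.2.
  by move=> e es; apply: HR; rewrite arcsF_cons in_cons es orbT.
have Ruh : R u (head y s) by apply: (HR (u, head y s)); rewrite arcsF_cons mem_head.
have Hys : uniq (y :: s) by rewrite /= ys Hus.
have [IH1 IH2 IH3 IH4] := IH Hys HT' Ty HR'.
have Tu : T u = (u \in (if 1 < (greedy b s).2 then u :: (greedy b s).1 else (greedy b s).1)).
  by rewrite HT ?mem_head //; case: ifP.
move: Tu; case: ltnP => Hd Tu /=.
- rewrite mem_head in Tu; split => //.
  + move=> a c; rewrite arcsF_cons in_cons => /orP [/eqP [-> ->]|/IH3 //].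
    by rewrite IH1 Tu /=; apply/eqP => h; rewrite h in Hd.
  + move=> v; rewrite in_cons => /orP [/eqP ->|]; first by rewrite Tu.
    exact: IH4.
- have Tu' : T u = false by rewrite Tu; apply/negP => /Psub; rewrite (negbTE us).
  split.
  + exact: Tu'.
  + move=> /eqP [] d0; exists (head y s); last by [].
    by rewrite IH1 d0.
  + move=> a c; rewrite arcsF_cons in_cons => /orP [/eqP [-> ->]|/IH3 //].
    by apply/negP => /andP [h _]; move: h; rewrite Tu'.
  + move=> v; rewrite in_cons => /orP [/eqP ->|]; last exact: IH4.
    move=> _; move: Hd; rewrite leq_eqVlt ltnS leqn0 => /orP [/eqP d1|/eqP d0].
      have [q Tq Rq] := IH2 (introT eqP d1).
      by exists q => //; right; exists (head y s); rewrite Ruh Rq.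
    by exists (head y s); [rewrite IH1 d0 | left].
Qed.


Definition qinv (V : finType) (S : {set V}) (A : {set V * V}) (Q : {set V}) : Prop :=
 [/\ Q \subset S,
  forall e, e \in A -> (e.1 \in S) && (e.2 \in S),
  forall a c, a \in Q -> c \in Q -> (a, c) \notin A &
  forall v, v \in S -> v \notin Q -> exists2 q, q \in Q &
     ((v, q) \in A \/ exists z, ((v, z) \in A) && ((z, q) \in A))].

Lemma inv_extend (V : finType) S A Q (x y : V) (us F : seq V) : qinv S A Q -> x \in S -> y \in S ->
 (forall v, v \in us -> v \notin S) -> {subset F <= us} ->
 (forall a c, (a, c) \in arcsF x us y ->
    ~~ (((a \in Q) || (a \in F)) && ((c \in Q) || (c \in F)))) ->
 (forall v, v \in us -> ~~ ((v \in Q) || (v \in F)) ->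
    exists2 q, (q \in Q) || (q \in F) &
     ((v, q) \in arcsF x us y \/ exists z, ((v, z) \in arcsF x us y) && ((z, q) \in arcsF x us y))) ->
 qinv (S :|: [set v in us]) (A :|: [set e in arcsF x us y]) (Q :|: [set v in F]).
Proof.
move=> [QS AS Ind Cov] xS yS usS FU HI HC.
have QS' : forall v, v \in Q -> v \in S by move=> v; apply: (subsetP QS).
split.
- apply/subsetP => v; rewrite !inE => /orP [/QS' ->//|/FU ->]; by rewrite orbT.
- move=> [a c]; rewrite !inE => /orP [/AS /andP [-> ->] //|/mem_zip2 /andP [ha hc]].
  move: ha hc; rewrite in_cons mem_rcons in_cons => /orP [/eqP ->|->] /orP [/eqP ->|->];
  by rewrite ?xS ?yS ?orbT.
- move=> a c; rewrite !inE => Ha Hc; apply/negP => /orP [hA|hB].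
    have /andP [aS cS] := AS _ hA.
    have aQ : a \in Q by case/orP: Ha => // /FU /usS; rewrite aS.
    have cQ : c \in Q by case/orP: Hc => // /FU /usS; rewrite cS.
    by move: (Ind _ _ aQ cQ); rewrite hA.
  by move: (HI _ _ hB); rewrite Ha Hc.
- move=> v; rewrite !inE negb_or => /orP [vS|vU] /andP [vQ vF].
    have [q qQ Hq] := Cov v vS vQ; exists q; first by rewrite inE qQ.
    case: Hq => [h|[z /andP [h1 h2]]]; [left|right; exists z]; by rewrite !inE ?h ?h1 ?h2.
  have [|q qQ Hq] := HC v vU; first by rewrite negb_or vQ.
  exists q; first by rewrite !inE.
  case: Hq => [h|[z /andP [h1 h2]]]; [left|right; exists z]; by rewrite !inE ?h ?h1 ?h2 ?orbT.
Qed.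


Lemma arith (b : bool) c d n : 3*c + d = n + (if b then 0 else 2) -> d <= 2 -> 2*(c + (d != 0)) + b <= n.+2.
Proof. case: b => /=; case: d => [|[|[|d]]] //=; lia. Qed.

Lemma ear (V : finType) S A Q (x y : V) us : qinv S A Q -> x \in S -> y \in S -> uniq us ->
  (forall v, v \in us -> v \notin S) -> 0 < size us -> (y \in Q) || (1 < size us) ->
  exists F : seq V, [/\ uniq F, {subset F <= us}, 2 * size F + (y \in Q) <= size us &
    qinv (S :|: [set v in us]) (A :|: [set e in arcsF x us y]) (Q :|: [set v in F])].
Proof.
move=> I xS yS Uu usS Hs Hb.
have [QS _ _ _] := I.
have QS' : forall v, v \in Q -> v \in S by move=> v; apply: (subsetP QS).
have nQ : forall v, v \in us -> v \notin Q.
  by move=> v /usS; apply: contra; apply: QS'.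
case: us Uu usS Hs Hb nQ => [|u1 [|u2 rest]] //= Uu usS _ Hb nQ.
  rewrite orbF in Hb.
  exists [::]; split => //; first by rewrite Hb.
  apply: inv_extend => //.
    move=> a c; rewrite !in_cons orbF => /orP [/eqP [-> ->]|/eqP [-> ->]];
    by rewrite (negbTE (nQ u1 (mem_head _ _))) /= ?andbF.
  move=> v; rewrite in_cons orbF => /eqP -> _; exists y; first by rewrite Hb.
  by left; rewrite !in_cons eqxx orbT.
move: Uu; rewrite /= !in_cons negb_or => /andP [/andP [u12 u1r] /andP [u2r Ur]].
set b := y \in Q.
set r := greedy b rest.
set F := if r.2 == 0 then r.1 else u2 :: r.1.
have [Psub Puniq Pcnt Pd] := greedy_struct b Ur.
have yr : y \notin rest.
  by apply/negP => yr; move: (usS y); rewrite !in_cons yr !orbT yS => /(_ isT).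
have Uyr : uniq (y :: rest) by rewrite /= yr Ur.
have FU : {subset F <= u2 :: rest}.
  move=> z; rewrite /F; case: ifP => _; first by move/Psub; rewrite in_cons => ->; rewrite orbT.
  by rewrite !in_cons => /orP [->|/Psub ->] //; rewrite orbT.
have zQ : forall z, z \in u1 :: u2 :: rest -> z \notin Q by move=> z zu; apply: nQ.
have Tu1 : (u1 \in Q) || (u1 \in F) = false.
  rewrite (negbTE (zQ u1 (mem_head _ _))) /=; apply/negP => /FU.
  by rewrite in_cons (negbTE u12) (negbTE u1r).
have Tu2 : (u2 \in Q) || (u2 \in F) = (r.2 != 0).
  rewrite (negbTE (zQ u2 _)) /=; last by rewrite !in_cons eqxx orbT.
  rewrite /F; case: ifP => _ /=; last by rewrite mem_head.
  by apply/negP => /Psub; rewrite (negbTE u2r).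
have Harcs : arcsF x [:: u1, u2 & rest] y = [:: (x, u1), (u1, u2), (u2, head y rest) & cs rest y].
  by rewrite -arcsF_cons.
have HT : forall z, z \in rest -> (fun z => (z \in Q) || (z \in F)) z = (z \in r.1).
  move=> z zr /=; rewrite (negbTE (zQ z _)) /=; last by rewrite !in_cons zr !orbT.
  rewrite /F; case: ifP => _ //; rewrite in_cons.
  by have -> : (z == u2) = false by apply/negbTE; apply: contraNneq u2r => <-.
have Ty : (fun z => (z \in Q) || (z \in F)) y = b.
  have -> : (y \in F) = false.
    apply/negP => /FU; rewrite in_cons => /orP [/eqP yu2|].
      by move: (usS u2); rewrite -yu2 !in_cons eqxx orbT yS => /(_ isT).
    by rewrite (negbTE yr).
  by rewrite /= orbF.
have HR : forall e, e \in cs rest y ->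
    (fun a c => (a, c) \in arcsF x [:: u1, u2 & rest] y) e.1 e.2.
  by move=> [a c] h /=; rewrite Harcs !in_cons h !orbT.
have [G1 G2 G3 G4] := greedy_sem (T := fun z => (z \in Q) || (z \in F))
  (R := fun a c => (a, c) \in arcsF x [:: u1, u2 & rest] y) Uyr HT Ty HR.
exists F; split.
- rewrite /F; case: ifP => _ //=; rewrite Puniq andbT.
  by apply/negP => /Psub; rewrite (negbTE u2r).
- by move=> z /FU zu; rewrite in_cons zu orbT.
- have -> : size F = size r.1 + (r.2 != 0) by rewrite /F; case: ifP => _ /=; rewrite ?addn0 ?addn1.
  exact: arith Pcnt Pd.
- apply: inv_extend => //.
  + by move=> z /FU zu; rewrite in_cons zu orbT.
  + move=> a c; rewrite Harcs !in_cons => /orP [/eqP [-> ->]|/orP [/eqP [-> ->]|/orP [/eqP [-> ->]|]]].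
    * by rewrite Tu1 andbF.
    * by rewrite Tu1.
    * by move: G1 => /= ->; rewrite Tu2; case: (r.2 == 0).
    * exact: G3.
  + move=> v; rewrite !in_cons => /orP [/eqP ->|/orP [/eqP ->|vr]] Tv.
    * case d0 : (r.2 == 0).
        exists (head y rest); first by move: G1 => /= ->; rewrite d0.
        by right; exists u2; rewrite Harcs !in_cons !eqxx !orbT.
      exists u2; first by rewrite Tu2 d0.
      by left; rewrite Harcs !in_cons !eqxx !orbT.
    * move: Tv; rewrite Tu2 negbK => d0.
      exists (head y rest); first by move: G1 => /= ->; rewrite d0.
      by left; rewrite Harcs !in_cons !eqxx !orbT.
    * exact: G4.
Qed.


Lemma zip_rcons_l (T1 T2 : Type) (s : seq T1) (t : seq T2) z :
  size s = size t -> zip (rcons s z) t = zip s t.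
Proof. by elim: s t => [|a s IH] [|b t] //= [/IH ->]. Qed.

Lemma take_zip' (T1 T2 : Type) n (s : seq T1) (t : seq T2) :
  take n (zip s t) = zip (take n s) (take n t).
Proof. elim: s n t => [|a s IH] [|n] [|b t] //=; by rewrite IH. Qed.

Lemma drop_zip' (T1 T2 : Type) n (s : seq T1) (t : seq T2) :
  drop n (zip s t) = zip (drop n s) (drop n t).
Proof.
elim: s n t => [|a s IH] [|n] [|b t] //=;
  first [by rewrite IH | by case: (drop n t) | by case: (drop n s)].
Qed.

Lemma rot_zip (T1 T2 : Type) n (s : seq T1) (t : seq T2) :
  size s = size t -> zip (rot n s) (rot n t) = rot n (zip s t).
Proof.
move=> Hst; rewrite /rot take_zip' drop_zip' zip_cat //.
by rewrite !size_drop Hst.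
Qed.

Lemma card_seqset (V : finType) (s : seq V) : uniq s -> #|[set v in s]| = size s.
Proof. by move=> Us; rewrite cardsE; apply/card_uniqP. Qed.

Lemma card_union_disj (V : finType) (S : {set V}) (s : seq V) :
  (forall v, v \in s -> v \notin S) -> uniq s -> #|S :|: [set v in s]| = #|S| + size s.
Proof.
move=> H Us; rewrite cardsU.
have -> : S :&: [set v in s] = set0.
  apply/setP => v; rewrite !inE; case vs: (v \in s); last by rewrite andbF.
  by rewrite (negbTE (H v vs)).
by rewrite cards0 subn0 card_seqset.
Qed.

Lemma card_union_le (V : finType) (Q : {set V}) (F : seq V) :
  #|Q :|: [set v in F]| <= #|Q| + size F.
Proof.
rewrite cardsU; apply: leq_trans (leq_subr _ _) _.
by rewrite leq_add2l cardsE card_size.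
Qed.

Lemma ar2 a b c : a <= 1 + b -> 2*b + true <= c -> 2*a <= c.+1.
Proof. move=> /= h1 h2; lia. Qed.

Lemma ar3 a b c q s (t : bool) : a <= q + b -> 2*b + t <= c -> 2*q <= s -> 2*a <= s + c.
Proof. move=> h1 h2 h3; case: t h2 => /= h2; lia. Qed.

Lemma main_inv (V : finType) (E : rel V) i S A : 3 <= i -> LE_reach E i S A ->
  exists Q, qinv S A Q /\ 2 * #|Q| <= #|S|.
Proof.
move=> i3; elim => {S A}.
- move=> x p /and3P [sp _ Uc].
  have xp : x \notin p by case/andP: Uc.
  have Up : uniq p by case/andP: Uc.
  have I0 : qinv [set x] set0 [set x].
    split; [exact: subxx | by move=> e; rewrite in_set0 | by move=> a c _ _; rewrite in_set0 | by move=> v ->].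
  have [||F [UF FU HF I1]] := ear (x := x) (y := x) (us := p) I0 (set11 x) (set11 x) Up _ sp.
  - by move=> v vp; rewrite inE; apply: contraNneq xp => <-.
  - by rewrite set11.
  exists ([set x] :|: [set v in F]); split.
    have -> : [set v in x :: p] = [set x] :|: [set v in p] by apply/setP => v; rewrite !inE.
    by rewrite -(set0U [set e in dcycle_arcs x p]).
  have h1 := card_union_le [set x] F; rewrite cards1 in h1.
  rewrite set11 in HF; rewrite card_seqset //=.
  exact: ar2 h1 HF.
- move=> S A x p _ [Q [IQ HQ]] /and5P [dp sp xS lS allS] ip.
  case/lastP: p dp sp lS allS ip => [|us y] //= dp _.
  rewrite belast_rcons last_rcons /= => yS allS ip.
  have Uus : uniq us.
    by case/andP: dp => _; rewrite /= rcons_uniq => /and3P [].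
  have su : 1 < size us by have := leq_trans i3 ip; rewrite size_rcons ltnS.
  have H1 : forall v, v \in us -> v \notin S by move=> v vp; apply: (allP allS v vp).
  have H2 : 0 < size us by apply: ltnW.
  have H3 : (y \in Q) || (1 < size us) by rewrite su orbT.
  have [F [UF FU HF I1]] := ear (x := x) (y := y) (us := us) IQ xS yS Uus H1 H2 H3.
  have eS : S :|: [set v in x :: rcons us y] = S :|: [set v in us].
    apply/setP => v; rewrite !inE mem_rcons !in_cons.
    case: (eqVneq v x) => [->|_]; first by rewrite xS.
    by case: (eqVneq v y) => [->|_]; first by rewrite yS.
  exists (Q :|: [set v in F]); rewrite eS; split.
    by rewrite /dpath_arcs -rcons_cons zip_rcons_l ?size_rcons.
  rewrite (card_union_disj H1 Uus).
  have h1 := card_union_le Q F.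
  exact: ar3 h1 HF HQ.
- move=> S A x p _ [Q [IQ HQ]] /andP [/and3P [sp pc Uc] /eqP c1] ip.
  have : has (mem S) (x :: p) by rewrite has_count c1.
  case/hasP => w wc wS.
  have wS1 : @in_mem (Finite.sort V) w (mem S) = true := wS.
  case: (rot_to wc) => j s' Hrot.
  have Uws : uniq (w :: s') by rewrite -Hrot rot_uniq.
  have Us' : uniq s' by case/andP: Uws.
  have pr : perm_eq (rot j (x :: p)) (x :: p) by rewrite perm_rot perm_refl.
  have cnt : count (mem S) (w :: s') = 1 by rewrite -Hrot -c1; apply/permP.
  have s'S : forall v, v \in s' -> v \notin S.
    move: cnt; rewrite /= wS1 add1n => /eqP; rewrite eqSS => /eqP c0.
    have : ~~ has (mem S) s' by rewrite has_count c0.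
    by move/hasPn.
  have hs : size s' = size p.
    by have := size_rot j (x :: p); rewrite Hrot /= => [[]].
  have su : 1 < size s' by have := leq_trans i3 ip; rewrite ltnS hs.
  have H2 : 0 < size s' by apply: ltnW.
  have H3 : (w \in Q) || (1 < size s') by rewrite su orbT.
  have [F [UF FU HF I1]] := ear (x := w) (y := w) (us := s') IQ wS wS Us' s'S H2 H3.
  have eS : S :|: [set v in x :: p] = S :|: [set v in s'].
    apply/setP => v; have hm : (v \in x :: p) = (v \in w :: s') by rewrite -Hrot mem_rot.
    rewrite !in_setU !in_set hm in_cons.
    by case: (eqVneq v w) => [->|_]; first by rewrite wS1.
  exists (Q :|: [set v in F]); rewrite eS; split.
    have -> : [set e in dcycle_arcs x p] = [set e in arcsF w s' w].
      have Harc : arcsF w s' w = rot j (dcycle_arcs x p).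
        rewrite /arcsF -rot1_cons -Hrot rot_rot rot_zip ?size_rot //.
        by rewrite /dcycle_arcs rot1_cons.
      by apply/setP => e; rewrite !inE Harc mem_rot.
    exact: I1.
  rewrite (card_union_disj s'S Us').
  have h1 := card_union_le Q F.
  exact: ar3 h1 HF HQ.
Qed.


Theorem mainTheorem3 (i : nat) (V : finType) (E : rel V) :
  3 <= i -> loopless E -> strong E -> in_LE E i ->
  exists Q : {set V}, small_quasi_kernel E Q.
Proof.
move=> i3 _ _ HLE.
have [Q [[_ _ Ind Cov] HQ]] := main_inv i3 HLE.
exists Q; split; last by rewrite cardsT in HQ.
split.
  move=> a c aQ cQ; have := Ind a c aQ cQ; by rewrite inE.
move=> v vQ; have [q qQ Hq] := Cov v (in_setT v) vQ.
exists q => //; case: Hq => [h|[z /andP [h1 h2]]].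
  by left; move: h; rewrite inE.
by right; exists z; move: h1 h2; rewrite !inE => -> ->.
Qed.
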